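(* Let $r,t,t_1,\dots,t_r$ be positive integers with $t_1+t_2+\dots+t_r=t+r-1$, and let $H$ be an $r$-partite $r$-graph with $|E(H)|>\frac{t-1}{r}\,|\partial H|$. Then there is an $r$-graph $H'\subseteq H$ with at least one edge such that $\delta_{(1,2,\dots,r)}(H')\ge (t_1,t_2,\dots,t_r)$.
   Context: An $r$-graph is an $r$-uniform hypergraph. An $r$-graph is $r$-partite if its vertex set can be partitioned into $r$ classes such that every edge contains exactly one vertex from each class. The shadow $\partial H$ of an $r$-graph $H$ is the set of all $(r-1)$-element sets contained in some edge of $H$. For an $r$-partite $r$-graph $H$ (with partition inherited from the ambient $r$-partition), we write $\delta_{(1,2,\dots,r)}(H)\ge (t_1,\dots,t_r)$ if the partition classes can be labeled $V_1,\dots,V_r$ so that for each $i\in[r]$, every $S\in\partial H$ with $S\cap V_i=\emptyset$ is contained in at least $t_i$ edges of $H$. *)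

(* Defs.v *)
From mathcomp Require Import all_boot all_fingroup.
Set Implicit Arguments. Unset Strict Implicit. Unset Printing Implicit Defensive.

(* A hypergraph on a finite vertex type T is a set of edges {set {set T}}.
   The ambient r-partition is given by a colouring c : T -> 'I_r
   (class V_i = c^-1(i)). *)

Definition rpartite (T : finType) (r : nat) (c : T -> 'I_r) (H : {set {set T}}) : Prop :=
  forall e, e \in H -> forall i : 'I_r, #|[set x in e | c x == i]| = 1.

Definition shadow (T : finType) (r : nat) (H : {set {set T}}) : {set {set T}} :=
  [set S : {set T} | [exists e in H, (S \subset e) && (#|S| == r.-1)]].

Definition codeg (T : finType) (H : {set {set T}}) (S : {set T}) : nat :=
  #|[set e in H | S \subset e]|.

(* delta_(1,...,r)(H) >= (t_1,...,t_r): the classes can be labelled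
   V_1..V_r (labelling = permutation s, V_i := class s i) so that every
   S in the shadow missing V_i lies in at least t_i edges. *)
Definition min_pos_codeg (T : finType) (r : nat) (c : T -> 'I_r)
    (H : {set {set T}}) (ts : 'I_r -> nat) : Prop :=
  exists s : {perm 'I_r}, forall i : 'I_r, forall S, S \in shadow r H ->
    [forall x in S, c x != s i] -> ts i <= codeg H S.

(* Main.v *)
Require Import Defs.
From mathcomp Require Import all_boot all_fingroup.
From mathcomp Require Import all_algebra.
From mathcomp Require Import zify.

Set Implicit Arguments. Unset Strict Implicit. Unset Printing Implicit Defensive.

Definition wt (T : finType) (r : nat) (c : T -> 'I_r) (f : 'I_r -> 'I_r)
  (ts : 'I_r -> nat) (S : {set T}) : nat :=
  \sum_(i < r) (ts i).-1 * [forall x in S, c x != f i].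

Lemma sum_sub_le (T : finType) (A B : {set T}) (F : T -> nat) :
  A \subset B -> \sum_(x in A) F x <= \sum_(x in B) F x.
Proof.
move=> AB.
rewrite [X in _ <= X](bigID (mem A)) /=.
apply: leq_trans (leq_addr _ _).
rewrite [X in X <= _](eq_bigl (fun x => (x \in B) && (x \in A))) //= => x.
by case: (boolP (x \in A)) => xA; rewrite ?andbF ?andbT // (subsetP AB x xA).
Qed.

Lemma key (T : finType) (r : nat) (c : T -> 'I_r) (s : {perm 'I_r}) ts :
  forall n (H0 : {set {set T}}), #|H0| <= n ->
  \sum_(S in shadow r H0) wt c s ts S < #|H0| ->
  exists H' : {set {set T}}, [/\ H' \subset H0, H' != set0 & min_pos_codeg c H' ts].
Proof.
elim=> [|n IH] H0 Hn Hw.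
  by rewrite leqn0 in Hn; move: Hw; rewrite (eqP Hn) ltn0.
case: (boolP [forall i, forall S in shadow r H0,
          [forall x in S, c x != s i] ==> (ts i <= codeg H0 S)]).
  move=> Hall; exists H0; split => //.
    by rewrite -card_gt0; exact: leq_ltn_trans (leq0n _) Hw.
  exists s => i S HS Hm.
  by move/forallP: Hall => /(_ i) /forall_inP /(_ S HS) /implyP; apply.
rewrite negb_forall => /existsP [i].
rewrite negb_forall_in => /exists_inP [S HS].
rewrite negb_imply => /andP [Hm Hlt]; rewrite -ltnNge in Hlt.
set P := [set e : {set T} | S \subset e].
set H1 := H0 :\: P.
have Hcd : codeg H0 S = #|H0 :&: P|.
  by rewrite /codeg; apply: eq_card => e; rewrite !inE.
have Hsplit : #|H0 :&: P| + #|H1| = #|H0| := cardsID P H0.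
have Hpos : 0 < codeg H0 S.
  move: HS; rewrite /shadow inE => /exists_inP [e He /andP [HSe _]].
  rewrite /codeg card_gt0; apply/set0Pn; exists e; by rewrite inE He HSe.
have Hsub : shadow r H1 \subset shadow r H0 :\ S.
  apply/subsetP => S'; rewrite /shadow !inE => /exists_inP [e].
  rewrite !inE => /andP [HeP He] /andP [HS'e HS'card].
  apply/andP; split.
    by apply: contraNneq HeP => E; rewrite -E.
  by apply/exists_inP; exists e => //; rewrite HS'e HS'card.
have Hw1 : \sum_(S' in shadow r H1) wt c s ts S' + wt c s ts S
           <= \sum_(S' in shadow r H0) wt c s ts S'.
  rewrite (big_setD1 S HS) /= addnC leq_add2l.
  exact: sum_sub_le.
have HwS : (ts i).-1 <= wt c s ts S.
  by rewrite /wt (bigD1 i) //= Hm muln1; exact: leq_addr.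
have h1 : #|H1| <= n.
  by move: Hn; rewrite -Hsplit -Hcd; lia.
have h2 : \sum_(S' in shadow r H1) wt c s ts S' < #|H1| .
  by move: Hw1 HwS Hw Hlt; rewrite -Hsplit -Hcd; lia.
have [H' [H'sub H'ne H'min]] := IH H1 h1 h2.
exists H'; split => //; apply: subset_trans H'sub _; exact: subsetDl.
Qed.

Lemma miss_le1 (T : finType) n (c : T -> 'I_n.+1) (H : {set {set T}}) (e S : {set T}) :
  rpartite c H -> e \in H -> S \subset e -> #|S| = n ->
  \sum_(j < n.+1) [forall x in S, c x != j] <= 1.
Proof.
move=> Hpart He HSe HS.
have Hcard : #|S| = \sum_(j < n.+1) #|[set x in S | c x == j]|.
  rewrite -sum1_card (partition_big c xpredT) //=.
  apply: eq_bigr => j _; rewrite -sum1_card.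
  by apply: eq_bigl => x; rewrite !inE.
have Hj : forall j, #|[set x in S | c x == j]| + [forall x in S, c x != j] = 1.
  move=> j; case: (boolP [forall x in S, c x != j]) => Hm.
    rewrite addn1; apply/eqP; rewrite eqSS cards_eq0; apply/eqP/setP => x.
    rewrite !inE; apply/negbTE; apply/andP => -[xS /eqP cx].
    by move/forall_inP: Hm => /(_ x xS); rewrite cx eqxx.
  rewrite addn0; move: Hm; rewrite negb_forall_in => /exists_inP [x xS].
  rewrite negbK => cx.
  apply/anti_leq/andP; split.
    rewrite -(Hpart e He j); apply: subset_leq_card; apply/subsetP => y.
    by rewrite !inE => /andP [yS ->]; rewrite (subsetP HSe y yS).
  by apply/card_gt0P; exists x; rewrite inE xS cx.
have : \sum_(j < n.+1) (#|[set x in S | c x == j]| + [forall x in S, c x != j]) = n.+1.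
  by rewrite (eq_bigr (fun _ => 1)) ?sum1_card ?card_ord // => j _; rewrite Hj.
rewrite big_split /= -Hcard HS; lia.
Qed.

Theorem lemma2p1 (T : finType) (r t : nat) (ts : 'I_r -> nat)
    (c : T -> 'I_r) (H : {set {set T}}) :
  0 < r -> 0 < t -> (forall i, 0 < ts i) ->
  \sum_(i < r) ts i = t + r - 1 ->
  rpartite c H ->
  (t - 1) * #|shadow r H| < r * #|H| ->
  exists H' : {set {set T}},
    [/\ H' \subset H, H' != set0 & min_pos_codeg c H' ts].
Proof.
case: r ts c => [//|n] ts c _ Ht Hts Hsum Hpart Hlt.
pose sh (k : 'I_n.+1) : {perm 'I_n.+1} := perm (@GRing.addIr _ k).
have Hts1 : \sum_(i < n.+1) (ts i).-1 = t - 1.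
  have : \sum_(i < n.+1) ts i = \sum_(i < n.+1) ((ts i).-1 + 1).
    by apply: eq_bigr => i _; rewrite addn1 prednK.
  rewrite big_split /= sum1_card card_ord Hsum; lia.
have Hbound : \sum_(k < n.+1) \sum_(S in shadow n.+1 H) wt c (sh k) ts S
              <= #|shadow n.+1 H| * (t - 1).
  rewrite exchange_big /= -sum_nat_const; apply: leq_sum => S HS.
  move: (HS); rewrite /shadow inE => /exists_inP [e He /andP [HSe /eqP HSc]].
  have Hm1 := miss_le1 Hpart He HSe HSc.
  rewrite /wt exchange_big /= -Hts1; apply: leq_sum => i _.
  rewrite -big_distrr /=.
  have -> : \sum_(k < n.+1) [forall x in S, c x != sh k i]
            = \sum_(j < n.+1) [forall x in S, c x != j].
    under eq_bigr do rewrite permE.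
    by rewrite [RHS](reindex_inj (@GRing.addrI _ i)).
  by rewrite -[X in _ <= X]muln1 leq_mul.
case: (boolP [exists k : 'I_n.+1,
   \sum_(S in shadow n.+1 H) wt c (sh k) ts S < #|H|]).
  case/existsP => k Hk.
  exact: (@key T n.+1 c (sh k) ts #|H| H (leqnn _) Hk).
move/existsPn => Hall.
have : \sum_(k < n.+1) #|H| <= \sum_(k < n.+1) \sum_(S in shadow n.+1 H) wt c (sh k) ts S.
  by apply: leq_sum => k _; rewrite leqNgt; exact: Hall.
rewrite sum_nat_const card_ord => H2.
have := leq_trans H2 Hbound; lia.
Qed.
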